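(* Let $n\ge 1$, let $\mathbf S=\{(\mathbf q_1,v_1),\ldots,(\mathbf q_m,v_m)\}$ be a finite multiset of queries and let $\mathbf Q=(\mathbf q,v)$ be a query, where $\mathbf q,\mathbf q_j\in\mathbb R^n$ and $v,v_j\in[0,\infty)$. The following are equivalent: (1) $\mathbf Q$ is linearly answerable from $\mathbf S$; (2) $\mathbf S\rightarrow\mathbf Q$; (3) there exist $c_1,\ldots,c_m\in\mathbb R$ such that $c_1\mathbf q_1+\cdots+c_m\mathbf q_m=\mathbf q$ and $c_1^2v_1+\cdots+c_m^2v_m\le v$.
   Context: A database is a vector $\mathbf x\in\mathbb R^n$. A linear query is a vector $\mathbf q\in\mathbb R^n$, with exact answer $\mathbf q(\mathbf x)=\mathbf q\cdot\mathbf x=\sum_i q_ix_i$. A query is a pair $\mathbf Q=(\mathbf q,v)$ with $\mathbf q$ a linear query and $v\ge 0$ a variance bound. A mechanism $\mathcal K$ assigns to each database $\mathbf x$ a real random variable $\mathcal K(\mathbf x)$; it answers $\mathbf Q=(\mathbf q,v)$ if for every database $\mathbf x$, $\mathbb E[\mathcal K(\mathbf x)]=\mathbf q(\mathbf x)$ and $\mathrm{Var}[\mathcal K(\mathbf x)]\le v$. Distinct queries are answered with independent randomness. $\mathbf Q$ is answerable from the multiset $\{\mathbf Q_1,\ldots,\mathbf Q_k\}$ if there is a function $f:\mathbb R^k\to\mathbb R$ such that for all mechanisms $\mathcal K_1,\ldots,\mathcal K_k$ answering $\mathbf Q_1,\ldots,\mathbf Q_k$ respectively (with $\mathcal K_1(\mathbf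 x),\ldots,\mathcal K_k(\mathbf x)$ mutually independent), the mechanism $\mathbf x\mapsto f(\mathcal K_1(\mathbf x),\ldots,\mathcal K_k(\mathbf x))$ answers $\mathbf Q$; it is linearly answerable if such an $f$ can be chosen linear. The determinacy relation $\mathbf S\rightarrow\mathbf Q$ between finite multisets of queries and queries is the smallest relation satisfying: (Summation) for every $k\ge 0$, $\{(\mathbf q_1,v_1),\ldots,(\mathbf q_k,v_k)\}\rightarrow(\mathbf q_1+\cdots+\mathbf q_k,\,v_1+\cdots+v_k)$; (Scalar multiplication) for every $c\in\mathbb R$, $\{(\mathbf q,v)\}\rightarrow(c\mathbf q,c^2v)$; (Relaxation) $\{(\mathbf q,v)\}\rightarrow(\mathbf q,v')$ whenever $v\le v'$; (Transitivity) if $\mathbf S_1\rightarrow\mathbf Q_1,\ldots,\mathbf S_k\rightarrow\mathbf Q_k$ and $\{\mathbf Q_1,\ldots,\mathbf Q_k\}\rightarrow\mathbf Q$, then the multiset union $\mathbf S_1\uplus\cdots\uplus\mathbf S_k\rightarrow\mathbf Q$. *)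

(* Defs.v *)
From HB Require Import structures.
From mathcomp Require Import all_boot all_order all_algebra.
From mathcomp Require Import all_classical all_reals all_analysis.
Set Implicit Arguments. Unset Strict Implicit. Unset Printing Implicit Defensive.
Import Order.TTheory GRing.Theory Num.Theory.
Local Open Scope classical_set_scope.
Local Open Scope ring_scope.

(* A database is x : 'rV[R]_n, a linear query is q : 'rV[R]_n,
   with exact answer q(x) = sum_i q_i x_i. *)
Definition qans (R : realType) (n : nat) (q x : 'rV[R]_n) : R :=
  \sum_(i < n) q 0 i * x 0 i.

(* A query is a pair (q, v) : linear query and variance bound. *)
Definition query (R : realType) (n : nat) := ('rV[R]_n * R)%type.

Definition answers (R : realType) (n : nat) d (T : measurableType d)
  (P : probability T R) (q : 'rV[R]_n) (v : R) (K : 'rV[R]_n -> T -> R) : Prop :=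
  forall x : 'rV[R]_n,
    [/\ measurable_fun setT (K x),
        P.-integrable setT (EFin \o K x),
        ('E_P[K x] = (qans q x)%:E)%E
      & ('V_P[K x] <= v%:E)%E].

Definition mutually_independent (R : realType) d (T : measurableType d)
  (P : probability T R) (k : nat) (X : 'I_k -> T -> R) : Prop :=
  forall B : 'I_k -> set R, (forall i, measurable (B i)) ->
    P (\big[setI/setT]_(i < k) (X i @^-1` B i)) =
    (\prod_(i < k) P (X i @^-1` B i))%E.

Definition linearly_answerable (R : realType) (n m : nat)
  (qs : 'I_m -> 'rV[R]_n) (vs : 'I_m -> R) (q : 'rV[R]_n) (v : R) : Prop :=
  exists c : 'I_m -> R,
    forall (d : measure_display) (T : measurableType d) (P : probability T R)
           (K : 'I_m -> 'rV[R]_n -> T -> R),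
      (forall i, answers P (qs i) (vs i) (K i)) ->
      (forall x, mutually_independent P (fun i => K i x)) ->
      answers P q v (fun x w => \sum_(i < m) c i * K i x w).

(* Finite multisets of queries are
   represented by sequences; the constructor det_perm makes the relation
   depend only on the multiset (the sequence up to permutation). *)
Inductive determines (R : realType) (n : nat) : seq (query R n) -> query R n -> Prop :=
| det_sum : forall s : seq (query R n),
    determines s (\sum_(p <- s) p.1, \sum_(p <- s) p.2)
| det_scale : forall (q : 'rV[R]_n) (v c : R),
    determines [:: (q, v)] (c *: q, c ^+ 2 * v)
| det_relax : forall (q : 'rV[R]_n) (v v' : R), v <= v' ->
    determines [:: (q, v)] (q, v')
| det_trans : forall (l : seq (seq (query R n) * query R n)) (Q : query R n),
    (forall p, p \in l -> determines p.1 p.2) ->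
    determines (map snd l) Q ->
    determines (flatten (map fst l)) Q
| det_perm : forall (s s' : seq (query R n)) (Q : query R n),
    perm_eq s s' -> determines s Q -> determines s' Q.

(* Main.v *)
Require Import Defs.
From HB Require Import structures.
From mathcomp Require Import all_boot all_order all_algebra.
From mathcomp Require Import all_classical all_reals all_analysis.
From mathcomp Require Import measurable_realfun.
Import Order.TTheory GRing.Theory Num.Theory.
Local Open Scope classical_set_scope.
Local Open Scope ring_scope.

Section indep.
Context d (T : measurableType d) (R : realType) (P : probability T R).
Local Open Scope ereal_scope.

Lemma indep_expectationM (X Y : T -> R) :
  measurable_fun setT X -> measurable_fun setT Y ->
  (forall A B, measurable A -> measurable B ->
     P (X @^-1` A `&` Y @^-1` B) = P (X @^-1` A) * P (Y @^-1` B)) ->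
  X \in Lfun P 1 -> Y \in Lfun P 1 -> (X * Y)%R \in Lfun P 1 ->
  'E_P[X * Y] = 'E_P[X] * 'E_P[Y].
Proof.
move=> mX mY ind X1 Y1 XY1.
pose Xp : {RV P >-> R} := HB.pack X (isMeasurableFun.Build _ _ _ _ _ mX).
pose Yp : {RV P >-> R} := HB.pack Y (isMeasurableFun.Build _ _ _ _ _ mY).
have mZ : measurable_fun setT (fun w => (X w, Y w)).
  by apply/measurable_fun_pairP; split.
pose Zp : {RV P >-> (R * R)%type} := HB.pack (fun w => (X w, Y w)) (isMeasurableFun.Build _ _ _ _ _ mZ).
pose mu := distribution P Xp.
pose nu := distribution P Yp.
have hE : forall A, measurable A -> (mu \x nu) A = distribution P Zp A.
  apply: product_measure_unique => A B mA mB.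
  transitivity (P (X @^-1` A `&` Y @^-1` B)); first by [].
  exact: ind.
pose f := fun z : R * R => (z.1 * z.2)%:E.
have mf : measurable_fun setT f.
  apply/measurable_EFinP; apply: measurable_funM.
    exact: measurable_fst.
  exact: measurable_snd.
have iZ : P.-integrable setT (f \o Zp).
  by move/Lfun1_integrable: XY1.
have iZd : (distribution P Zp).-integrable setT f.
  exact: (integrable_pushforward mZ mf iZ).
have iprod : (mu \x nu).-integrable setT f.
  apply/integrableP; split => //.
  rewrite (eq_measure_integral (distribution P Zp)); last by move=> A mA _; exact: hE.
  by move/integrableP: iZd => [].
have iX : mu.-integrable setT EFin.
  have h := integrable_pushforward (mu:=P) (D:=setT) (f:=EFin) mX (@EFin_measurable _ setT).
  rewrite preimage_setT in h; apply: h => //.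
  by move/Lfun1_integrable: X1.
have iY : nu.-integrable setT EFin.
  have h := integrable_pushforward (mu:=P) (D:=setT) (f:=EFin) mY (@EFin_measurable _ setT).
  rewrite preimage_setT in h; apply: h => //.
  by move/Lfun1_integrable: Y1.
have EX : 'E_P[X] = \int[mu]_x x%:E.
  rewrite unlock (integral_distribution (X:=Xp)) //.
  by move/Lfun1_integrable: X1.
have EY : 'E_P[Y] = \int[nu]_x x%:E.
  rewrite unlock (integral_distribution (X:=Yp)) //.
  by move/Lfun1_integrable: Y1.
have EXY : 'E_P[X * Y] = \int[mu \x nu]_z f z.
  rewrite (eq_measure_integral (distribution P Zp)); last by move=> A mA _; exact: hE.
  by rewrite unlock (integral_distribution (X:=Zp)).
rewrite EXY -integral12_prod_meas1 //.
rewrite /fubini_F /f /=.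
under eq_integral => x _ do rewrite (integralZl measurableT iY).
rewrite -EY.
have fY : 'E_P[Y] = (fine 'E_P[Y])%:E by rewrite fineK // expectation_fin_num.
rewrite fY (integralZr measurableT iX) -EX //.
Qed.

Lemma Lfun_meas {f : T -> R} {p : \bar R} : f \in Lfun P p -> measurable_fun setT f.
Proof. by rewrite inE => /andP[/[!inE]/= mf _]. Qed.

Lemma Lfun2_of_sq (f : T -> R) : measurable_fun setT f ->
  \int[P]_x (f x ^+ 2)%:E < +oo -> f \in Lfun P 2%:E.
Proof.
move=> mf fin; rewrite inE; apply/andP; split; first by rewrite inE.
rewrite inE /= /finite_norm unlock /Lnorm.
apply: poweR_lty.
under eq_integral => x _ do rewrite abse_EFin poweR_EFin powR_mulrn ?normr_ge0 // real_normK ?num_real //.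
exact: fin.
Qed.

Lemma Lfun_var (X : T -> R) : X \in Lfun P 1 -> 'V_P[X] < +oo -> X \in Lfun P 2%:E.
Proof.
move=> X1 Vfin.
pose Y := (X \- cst (fine 'E_P[X]))%R.
have mX := Lfun_meas X1.
have mY : measurable_fun setT Y by apply: measurable_funB.
have Y2 : Y \in Lfun P 2%:E.
  apply: Lfun2_of_sq => //.
  move: Vfin; rewrite /variance !unlock => h; apply: le_lt_trans h.
  rewrite /Y !unlock le_eqVlt; apply/orP; left; apply/eqP.
  by apply: eq_integral => x _; rewrite expr2.
have -> : X = (Y + cst (fine 'E_P[X]))%R.
  by apply/funext => x; rewrite /Y /= subrK.
rewrite rpredD //; first by rewrite lee1n.
by move=> ?; apply: Lfun_cst.
Qed.

Lemma indep_cov0 (X Y : T -> R) : X \in Lfun P 2%:E -> Y \in Lfun P 2%:E ->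
  (forall A B, measurable A -> measurable B ->
     P (X @^-1` A `&` Y @^-1` B) = P (X @^-1` A) * P (Y @^-1` B)) ->
  covariance P X Y = 0.
Proof.
move=> X2 Y2 ind.
have Pfin : P setT \is a fin_num := fin_num_measure P _ measurableT.
have X1 := Lfun_subset12 Pfin X2.
have Y1 := Lfun_subset12 Pfin Y2.
have XY1 := Lfun2_mul_Lfun1 X2 Y2.
rewrite covarianceE // (@indep_expectationM X Y (Lfun_meas X1) (Lfun_meas Y1) ind X1 Y1) //.
by rewrite subee // fin_numM // expectation_fin_num.
Qed.

Lemma mi_pair k (X : 'I_k -> T -> R) : mutually_independent P X ->
  forall i j, i != j -> forall A B, measurable A -> measurable B ->
  P (X i @^-1` A `&` X j @^-1` B) = P (X i @^-1` A) * P (X j @^-1` B).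
Proof.
move=> mi i j ij A B mA mB.
pose Bf := fun l : 'I_k => if l == i then A else if l == j then B else setT.
have mBf : forall l, measurable (Bf l).
  by move=> l; rewrite /Bf; case: ifP => // _; case: ifP.
have := mi Bf mBf.
rewrite (bigD1 i) //= (bigD1 j) 1?eq_sym //=.
rewrite [in X in _ = X -> _](bigD1 i) //= [in X in _ = X -> _](bigD1 j) 1?eq_sym //=.
have Bfi : Bf i = A by rewrite /Bf eqxx.
have Bfj : Bf j = B by rewrite /Bf eq_sym (negbTE ij) eqxx.
have Bfl : forall l, (l != i) && (l != j) -> Bf l = setT.
  by move=> l /andP[li lj]; rewrite /Bf (negbTE li) (negbTE lj).
rewrite Bfi Bfj big1; last by move=> l /Bfl ->; rewrite preimage_setT.
rewrite big1; last by move=> l /Bfl ->; rewrite preimage_setT probability_setT.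
by rewrite setIT mule1.
Qed.

End indep.

Section lcomb.
Context d (T : measurableType d) (R : realType) (P : probability T R).
Local Open Scope ereal_scope.
Variables (I : eqType) (Xs : I -> T -> R) (c : I -> R).
Hypothesis L2 : forall i, Xs i \in Lfun P 2%:E.
Hypothesis cov0 : forall i j, i != j -> covariance P (Xs i) (Xs j) = 0.

Definition lcomb (s : seq I) := fun w => (\sum_(i <- s) c i * Xs i w)%R.

Lemma lcomb_cons a s : lcomb (a :: s) = ((c a \o* Xs a) + lcomb s)%R.
Proof. by apply/funext => w; rewrite /lcomb big_cons !fctE mulrC. Qed.

Lemma lcomb_nil : lcomb [::] = cst 0%R.
Proof. by apply/funext => w; rewrite /lcomb big_nil. Qed.

Let Pfin : P setT \is a fin_num := fin_num_measure P _ measurableT.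

Lemma Lfun2D (f g : T -> R) : f \in Lfun P 2%:E -> g \in Lfun P 2%:E ->
  (f + g)%R \in Lfun P 2%:E.
Proof.
move=> f2 g2; rewrite rpredD //; first by rewrite lee1n.
Qed.

Lemma lcomb_Lfun2 s : lcomb s \in Lfun P 2%:E.
Proof.
elim: s => [|a s IH]; first by rewrite lcomb_nil Lfun_cst.
by rewrite lcomb_cons Lfun2D // Lfun_scale // ler1n.
Qed.

Lemma cov_lcomb Y s : Y \in Lfun P 2%:E ->
  (forall i, i \in s -> covariance P Y (Xs i) = 0) -> covariance P Y (lcomb s) = 0.
Proof.
move=> Y2; elim: s => [|a s IH] H; first by rewrite lcomb_nil covariance_cst_r.
rewrite lcomb_cons covarianceDr // ?Lfun_scale ?ler1n ?lcomb_Lfun2 //.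
rewrite (covarianceZr _ (Lfun_subset12 Pfin Y2) (Lfun_subset12 Pfin (L2 a)) (Lfun2_mul_Lfun1 Y2 (L2 a))).
rewrite H ?mem_head // mule0 add0e IH // => i si.
by apply: H; rewrite inE si orbT.
Qed.

Lemma var_lcomb s : uniq s ->
  'V_P[lcomb s] = \sum_(i <- s) (c i ^+ 2)%:E * 'V_P[Xs i].
Proof.
elim: s => [|a s IH]; first by rewrite lcomb_nil variance_cst big_nil.
move=> /= /andP[aNs us].
rewrite lcomb_cons varianceD ?Lfun_scale ?ler1n ?lcomb_Lfun2 //.
rewrite varianceZ // IH // big_cons.
rewrite cov_lcomb ?Lfun_scale ?ler1n //; first by rewrite mule0 adde0.
move=> i si; rewrite (covarianceZl _ (Lfun_subset12 Pfin (L2 a)) (Lfun_subset12 Pfin (L2 i)) (Lfun2_mul_Lfun1 (L2 a) (L2 i))).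
rewrite cov0 ?mule0 //.
by apply: contraNneq aNs => ->.
Qed.


Lemma Lfun1D (f g : T -> R) : f \in Lfun P 1 -> g \in Lfun P 1 ->
  (f + g)%R \in Lfun P 1.
Proof. by move=> f1 g1; rewrite rpredD. Qed.

Lemma lcomb_Lfun1 s : (forall i, Xs i \in Lfun P 1) -> lcomb s \in Lfun P 1.
Proof.
move=> X1; elim: s => [|a s IH]; first by rewrite lcomb_nil Lfun_cst.
by rewrite lcomb_cons Lfun1D // Lfun_scale.
Qed.

Lemma exp_lcomb (a : I -> R) s : (forall i, Xs i \in Lfun P 1) ->
  (forall i, 'E_P[Xs i] = (a i)%:E) -> 'E_P[lcomb s] = (\sum_(i <- s) c i * a i)%:E.
Proof.
move=> X1 eX; elim: s => [|b s IH]; first by rewrite lcomb_nil expectation_cst big_nil.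
rewrite lcomb_cons expectationD ?Lfun_scale ?lcomb_Lfun1 //.
by rewrite expectationZl // eX IH big_cons EFinD EFinM.
Qed.

End lcomb.



Section comb.
Variables (R : realType) (n : nat).
Notation Q := (query R n).

Definition cert (s : seq Q) (QQ : Q) := exists w : seq (R * Q),
  [/\ map snd w = s, \sum_(p <- w) p.1 *: p.2.1 = QQ.1 &
      \sum_(p <- w) p.1 ^+ 2 * p.2.2 <= QQ.2].

Lemma perm_lift (w : seq (R * Q)) (s' : seq Q) :
  perm_eq (map snd w) s' -> exists w', perm_eq w w' /\ map snd w' = s'.
Proof.
elim: s' w => [|x s' IH] w.
  by move/perm_nilP => /eqP; rewrite -size_eq0 size_map size_eq0 => /eqP ->; exists [::].
move=> pw.
have : x \in map snd w by rewrite (perm_mem pw) mem_head.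
case/mapP => y yw xy.
have py := perm_to_rem yw.
have : perm_eq (map snd (rem y w)) s'.
  rewrite -(perm_cons x) {1}xy.
  have -> : y.2 :: map snd (rem y w) = map snd (y :: rem y w) by [].
  by rewrite -(permPl (perm_map snd py)).
case/IH => w'' [pw'' ew''].
exists (y :: w''); split; last by rewrite /= ew'' xy.
by rewrite (perm_trans py) // perm_cons.
Qed.

Lemma trans_cert (l : seq (seq Q * Q)) (w0 : seq (R * Q)) :
  (forall p, p \in l -> cert p.1 p.2) -> map snd w0 = map snd l ->
  exists W : seq (R * Q), [/\ map snd W = flatten (map fst l),
    \sum_(p <- W) p.1 *: p.2.1 = \sum_(p <- w0) p.1 *: p.2.1 &
    \sum_(p <- W) p.1 ^+ 2 * p.2.2 <= \sum_(p <- w0) p.1 ^+ 2 * p.2.2].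
Proof.
elim: l w0 => [|[s1 Q1] l IH] [|[dd Q1'] w0] //= Hc.
  by move=> _; exists [::]; rewrite !big_nil.
case=> eQ ew.
have Hc' : forall p, p \in l -> cert p.1 p.2.
  by move=> p pl; apply: Hc; rewrite inE pl orbT.
have [W' [eW' sW' vW']] := IH w0 Hc' ew.
have [u [eu su vu]] := Hc (s1, Q1) (mem_head _ _).
exists ([seq (dd * p.1, p.2) | p <- u] ++ W'); split.
- rewrite map_cat -map_comp eW' /=; congr (_ ++ _); rewrite -[s1]eu; exact: eq_map.
- rewrite big_cat big_cons big_map sW' /= eQ -su scaler_sumr; congr (_ + _).
  by apply: eq_bigr => p _; rewrite scalerA.
- rewrite big_cat big_cons big_map /= eQ lerD //.
  rewrite (eq_bigr (fun p => dd ^+ 2 * (p.1 ^+ 2 * p.2.2))); last first.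
    by move=> p _; rewrite exprMn mulrA.
  by rewrite -mulr_sumr ler_wpM2l // sqr_ge0.
Qed.

Lemma det_cert s QQ : determines s QQ -> cert s QQ.
Proof.
elim => {s QQ}.
- move=> s; exists [seq (1, p) | p <- s]; split.
  + by rewrite -map_comp map_id.
  + by rewrite big_map /=; apply: eq_bigr => p _; rewrite scale1r.
  + by rewrite big_map /= le_eqVlt; apply/orP; left; apply/eqP/eq_bigr => p _; rewrite expr1n mul1r.
- move=> q v c; exists [:: (c, (q, v))]; split => //.
  + by rewrite big_seq1.
  + by rewrite big_seq1.
- move=> q v v' vv'; exists [:: (1, (q, v))]; split => //.
  + by rewrite big_seq1 scale1r.
  + by rewrite big_seq1 expr1n mul1r.
- move=> l QQ _ Hc _ [w0 [ew0 sw0 vw0]].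
  have [W [eW sW vW]] := trans_cert l w0 Hc ew0.
  by exists W; split => //; [rewrite sW | apply: le_trans vw0].
- move=> s s' QQ ss' _ [w [ew sw vw]].
  have [w' [pw' ew']] : exists w', perm_eq w w' /\ map snd w' = s'.
    by apply: perm_lift; rewrite ew.
  exists w'; split => //.
  + by rewrite -(perm_big _ pw').
  + by rewrite -(perm_big _ pw').
Qed.


Lemma seq_coeffs (J : eqType) (r : seq J) (g : J -> Q) (w : seq (R * Q)) :
  uniq r -> map snd w = map g r -> exists c : J -> R, w = map (fun j => (c j, g j)) r.
Proof.
elim: r w => [|a r IH] [|[dd x] w] //=.
  by move=> _ _; exists (fun _ => 0).
move=> /andP[ar ur] [xa ew].
have [c ec] := IH w ur ew.
exists (fun j => if j == a then dd else c j) => /=.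
rewrite eqxx xa ec; congr (_ :: _).
apply/eq_in_map => j jr /=.
by case: eqP => // ja; move: ar; rewrite -ja jr.
Qed.

Lemma sum_enum_ord m (F : 'I_m -> R) : \sum_(j <- enum 'I_m) F j = \sum_(j < m) F j.
Proof. by rewrite enumT. Qed.

Lemma sum_enum_ordQ m (F : 'I_m -> 'rV[R]_n) : \sum_(j <- enum 'I_m) F j = \sum_(j < m) F j.
Proof. by rewrite enumT. Qed.

Lemma cert_coeffs m (qs : 'I_m -> 'rV[R]_n) (vs : 'I_m -> R) (q : 'rV[R]_n) (v : R) :
  cert [seq (qs j, vs j) | j : 'I_m] (q, v) ->
  exists c : 'I_m -> R,
    \sum_(j < m) c j *: qs j = q /\ \sum_(j < m) c j ^+ 2 * vs j <= v.
Proof.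
case=> w [ew sw vw].
have [c ec] := @seq_coeffs _ (enum 'I_m) (fun j => (qs j, vs j)) w (enum_uniq _) ew.
exists c; move: sw vw; rewrite ec !big_map /= => sw vw.
by split.
Qed.

Lemma coeffs_det m (qs : 'I_m -> 'rV[R]_n) (vs : 'I_m -> R) (q : 'rV[R]_n) (v : R)
  (c : 'I_m -> R) :
  \sum_(j < m) c j *: qs j = q -> \sum_(j < m) c j ^+ 2 * vs j <= v ->
  determines [seq (qs j, vs j) | j : 'I_m] (q, v).
Proof.
move=> sq sv.
pose l := [seq ([:: (qs j, vs j)], (c j *: qs j, c j ^+ 2 * vs j)) | j : 'I_m].
have e1 : flatten (map fst l) = [seq (qs j, vs j) | j : 'I_m].
  have fl : forall r : seq 'I_m, flatten (map fst [seq ([:: (qs j, vs j)], (c j *: qs j, c j ^+ 2 * vs j)) | j <- r]) = [seq (qs j, vs j) | j <- r] by elim => //= j r ->.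
  exact: fl.
rewrite -e1; apply: det_trans.
  by move=> p /mapP [j _ ->]; apply: det_scale.
pose S := (\sum_(p <- map snd l) p.1, \sum_(p <- map snd l) p.2).
have -> : map snd l = flatten (map fst [:: (map snd l, S)]) by rewrite /= cats0.
apply: det_trans.
  by move=> p; rewrite inE => /eqP ->; apply: det_sum.
have eS : S = (q, \sum_(j < m) c j ^+ 2 * vs j).
  by rewrite /S /l -map_comp !big_map /= -sq.
by rewrite /= eS; apply: det_relax.
Qed.

End comb.


Definition Om (m : nat) := {ffun 'I_m -> bool}.
HB.instance Definition _ m := Finite.on (Om m).
HB.instance Definition _ m := isPointed.Build (Om m) [ffun=> false].
HB.instance Definition _ m := @isMeasurable.Build default_measure_display (Om m)
  discrete_measurable discrete_measurable0 discrete_measurableC discrete_measurableU.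

Definition enO m (k : nat) : Om m := nth [ffun=> false] (enum (Om m)) k.

Definition PO (R : realType) m : set (Om m) -> \bar R :=
  mscale (#|Om m|%:R^-1)%:nng (msum (fun k => \d_(enO m k)) #|Om m|).

HB.instance Definition _ R m := Measure.on (PO R m).

Lemma card_Om m : #|Om m| = (2 ^ m)%N.
Proof. by rewrite card_ffun card_bool card_ord. Qed.

Lemma POE (R : realType) m (A : set (Om m)) :
  PO R m A = (#|Om m|%:R^-1 * \sum_(t : Om m) \1_A t)%:E.
Proof.
rewrite /PO /mscale /= /msum /= /dirac /= EFinM; congr (_ * _)%E.
rewrite sumEFin; congr (_%:E).
rewrite [RHS](_ : _ = \sum_(t <- enum (Om m)) \1_A t); last by rewrite enumT.
rewrite (big_nth [ffun=> false]) big_mkord -cardE.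
by [].
Qed.


Lemma PO_setT (R : realType) m : PO R m setT = 1%E.
Proof.
rewrite POE (eq_bigr (fun _ => 1)); last by move=> t _; rewrite indicE in_setT.
rewrite sumr_const -[(1 *+ _)]/(_%:R) mulVf //.
by rewrite card_Om pnatr_eq0 expn_eq0.
Qed.

HB.instance Definition _ R m := Measure_isProbability.Build _ _ _ (PO R m) (PO_setT R m).

Section om_lemmas.
Variables (R : realType) (m : nat).
Local Notation P := (PO R m).

Lemma meas_Om (f : Om m -> R) : measurable_fun setT f.
Proof. by move=> _ Y _. Qed.

Lemma Lfun1_Om (f : Om m -> R) : f \in Lfun P 1.
Proof.
apply/Lfun1_integrable.
apply: (@le_integrable _ _ _ _ _ measurableT _ (EFin \o cst (\sum_t `|f t|))).
- by apply/measurable_EFinP; exact: meas_Om.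
- move=> t _ /=; rewrite lee_fin [X in _ <= X]ger0_norm ?sumr_ge0 //.
  by rewrite (bigD1 t) //= lerDl sumr_ge0.
- exact: (@finite_measure_integrable_cst _ _ _ P setT _ measurableT).
Qed.

Lemma Lfun2_Om (f : Om m -> R) : f \in Lfun P 2%:E.
Proof.
apply: Lfun2_of_sq; first exact: meas_Om.
have := Lfun1_Om (fun t => f t ^+ 2).
by move/Lfun1_integrable/(integrable_lty measurableT).
Qed.

End om_lemmas.

Lemma indic_bigI (T : Type) (R : realType) (I : Type) (r : seq I) (S : I -> set T) t :
  (\1_(\big[setI/setT]_(i <- r) S i) t : R) = \prod_(i <- r) (\1_(S i) t : R).
Proof.
elim: r => [|a r IH]; first by rewrite !big_nil indicE in_setT.
by rewrite !big_cons -IH !indicE in_setI; case: (t \in S a); case: (t \in _); rewrite /= ?mulr1 ?mulr0 ?mul0r.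
Qed.

Section om_prod.
Variables (R : realType) (m : nat).
Local Notation P := (PO R m).

Lemma sum_prod_Om (G : 'I_m -> bool -> R) :
  \sum_(t : Om m) \prod_i G i (t i) = \prod_i (G i true + G i false).
Proof.
rewrite (eq_bigr (fun i => \sum_(b : bool) G i b)); last by move=> i _; rewrite big_bool.
by rewrite bigA_distr_bigA.
Qed.

Lemma PO_prodE (G : 'I_m -> bool -> R) (A : set (Om m)) :
  (forall t, \1_A t = \prod_i G i (t i)) ->
  P A = (\prod_i ((G i true + G i false) / 2))%:E.
Proof.
move=> hA; rewrite POE (eq_bigr _ (fun t _ => hA t)) sum_prod_Om card_Om.
congr (_%:E).
rewrite big_split /= mulrC; congr (_ * _).
by rewrite prodr_const card_ord natrX exprVn.
Qed.

End om_prod.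

Definition Zf (R : realType) {m} (i : 'I_m) (t : Om m) : R := if t i then 1 else -1.

Definition KO {R : realType} {n m : nat} (qs : 'I_m -> 'rV[R]_n) (vs : 'I_m -> R)
  (i : 'I_m) (x : 'rV[R]_n) : Om m -> R :=
  (cst (qans (qs i) x) \+ (Num.sqrt (vs i) \o* Zf R i))%R.

Section KO.
Variables (R : realType) (n m : nat) (qs : 'I_m -> 'rV[R]_n) (vs : 'I_m -> R).
Hypothesis Hvs : forall j, 0 <= vs j.
Local Notation P := (PO R m).
Local Open Scope ereal_scope.

Lemma two_half : ((1 + 1) / 2 = 1 :> R)%R.
Proof. by rewrite divff // pnatr_eq0. Qed.

Lemma PO_half (i : 'I_m) (bb : bool) : P [set t | t i = bb] = (2^-1)%:E.
Proof.
rewrite (@PO_prodE R m (fun j b => if j == i then (b == bb)%:R else 1%R)); last first.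
  move=> t; rewrite (bigD1 i) //= eqxx big1 ?mulr1; last by move=> j /negbTE ->.
  by rewrite indicE; congr (_%:R); congr (nat_of_bool _); apply/idP/eqP => [/set_mem|/mem_set].
congr (_%:E); rewrite (bigD1 i) //= eqxx big1 ?mulr1; last by move=> j /negbTE ->; exact: two_half.
by case: bb => /=; rewrite ?add0r ?addr0 mul1r.
Qed.

Lemma EZ i : 'E_P[Zf R i] = 0.
Proof.
pose A1 : set (Om m) := [set t | t i = true].
pose A0 : set (Om m) := [set t | t i = false].
have e1 t : (t \in A1) = t i.
  by apply/idP/idP => [/set_mem -> //|ti]; apply/mem_set.
have e0 t : (t \in A0) = ~~ t i.
  by apply/idP/idP => [/set_mem -> //|ti]; apply/mem_set; exact/negbTE.
have -> : Zf R i = (\1_A1 \- \1_A0)%R.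
  apply/funext => t; rewrite /Zf /= !indicE e1 e0.
  by case: (t i) => /=; rewrite ?subr0 ?sub0r.
have h1 : 'E_P[\1_A1] = (2^-1)%:E by rewrite expectation_indic //; exact: PO_half.
have h0 : 'E_P[\1_A0] = (2^-1)%:E by rewrite expectation_indic //; exact: PO_half.
by rewrite expectationB ?Lfun1_Om // h1 h0 subee.
Qed.

Lemma VZ i : 'V_P[Zf R i] = 1.
Proof.
rewrite /variance covarianceE ?Lfun1_Om // EZ mule0 sube0.
have -> : (Zf R i * Zf R i)%R = cst 1%R.
  apply/funext => t; rewrite /Zf /=; change ((if t i then 1 else -1) * (if t i then 1 else -1) = 1 :> R)%R.
  by case: (t i); rewrite ?mulr1 ?mulrNN ?mulr1.
by rewrite expectation_cst.
Qed.

Lemma var_KO i x : 'V_P[KO qs vs i x] = (vs i)%:E.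
Proof.
rewrite /KO varianceD_cst_l ?Lfun2_Om // varianceZ ?Lfun2_Om // VZ mule1.
by rewrite sqr_sqrtr.
Qed.

Lemma answers_KO i : answers P (qs i) (vs i) (KO qs vs i).
Proof.
move=> x; split.
- exact: meas_Om.
- by apply/Lfun1_integrable; exact: Lfun1_Om.
- rewrite /KO expectationD ?Lfun1_Om // expectation_cst expectationZl ?Lfun1_Om //.
  by rewrite EZ mule0 adde0.
- rewrite /KO varianceD_cst_l ?Lfun2_Om // varianceZ ?Lfun2_Om // VZ mule1.
  by rewrite sqr_sqrtr.
Qed.

Lemma indep_KO x : mutually_independent P (fun i => KO qs vs i x).
Proof.
move=> B mB.
pose G i b := (\1_(B i) (qans (qs i) x + (if b then 1 else -1) * Num.sqrt (vs i)) : R)%R.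
transitivity ((\prod_i ((G i true + G i false) / 2))%:E).
  apply: PO_prodE => t.
  by rewrite indic_bigI; apply: eq_bigr => i _; rewrite !indicE.
rewrite -prodEFin; apply: eq_bigr => i _; symmetry.
apply: eq_trans (@PO_prodE R m (fun j b => if j == i then G i b else 1%R) _ _) _.
  move=> t; rewrite (bigD1 i) //= eqxx big1 ?mulr1; last by move=> j /negbTE ->.
  by rewrite !indicE.
congr (_%:E); rewrite (bigD1 i) //= eqxx big1 ?mulr1 //.
by move=> j /negbTE ->; exact: two_half.
Qed.

End KO.


Section main.
Variables (R : realType) (n m : nat) (qs : 'I_m -> 'rV[R]_n) (vs : 'I_m -> R).

Lemma qans_lin (c : 'I_m -> R) x :
  \sum_(i < m) c i * qans (qs i) x = qans (\sum_(i < m) c i *: qs i) x.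
Proof.
rewrite /qans.
under [RHS]eq_bigr => k _ do rewrite summxE mulr_suml.
rewrite exchange_big /=; apply: eq_bigr => i _; rewrite mulr_sumr.
by apply: eq_bigr => k _; rewrite mxE mulrA.
Qed.

Lemma qans_inj (p p' : 'rV[R]_n) : (forall x, qans p x = qans p' x) -> p = p'.
Proof.
move=> h; apply/rowP => k.
have e : forall p0 : 'rV[R]_n, qans p0 (delta_mx 0 k) = p0 0 k.
  move=> p0; rewrite /qans (bigD1 k) //= mxE !eqxx mulr1 big1 ?addr0 // => j jk.
  by rewrite mxE (negbTE jk) andbF mulr0.
by rewrite -!e h.
Qed.

Local Open Scope ereal_scope.

Lemma lcomb_props d (T : measurableType d) (P : probability T R)
    (K : 'I_m -> 'rV[R]_n -> T -> R) (c : 'I_m -> R) x :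
  (forall i, answers P (qs i) (vs i) (K i)) ->
  mutually_independent P (fun i => K i x) ->
  [/\ (fun w => \sum_(i < m) c i * K i x w)%R \in Lfun P 2%:E,
      'E_P[(fun w => \sum_(i < m) c i * K i x w)%R] =
        (\sum_(i < m) c i * qans (qs i) x)%:E &
      'V_P[(fun w => \sum_(i < m) c i * K i x w)%R] =
        \sum_(i < m) (c i ^+ 2)%:E * 'V_P[K i x]].
Proof.
move=> hK hind.
have X1 : forall i, K i x \in Lfun P 1.
  by move=> i; have [_ iX _ _] := hK i x; apply/Lfun1_integrable.
have X2 : forall i, K i x \in Lfun P 2%:E.
  move=> i; have [_ _ _ vX] := hK i x.
  by apply: Lfun_var => //; apply: le_lt_trans vX (ltry _).
have cov0 : forall i j, i != j -> covariance P (K i x) (K j x) = 0.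
  move=> i j ij; apply: indep_cov0 => //.
  by move=> A B mA mB; have := @mi_pair _ _ _ P _ _ hind i j ij A B mA mB.
have -> : (fun w => \sum_(i < m) c i * K i x w)%R =
          @lcomb _ T R _ (fun i => K i x) c (index_enum 'I_m) by [].
split.
- exact: lcomb_Lfun2.
- apply: exp_lcomb => // i.
  by have [_ _ eX _] := hK i x.
- by rewrite var_lcomb // index_enum_uniq.
Qed.


Lemma la_iff (Hvs : forall j, (0 <= vs j)%R) (q : 'rV[R]_n) (v : R) :
  linearly_answerable qs vs q v <->
  exists c : 'I_m -> R,
    (\sum_(j < m) c j *: qs j)%R = q /\ (\sum_(j < m) c j ^+ 2 * vs j <= v)%R.
Proof.
split.
- case=> c hc; exists c.
  have hK := @answers_KO R n m qs vs Hvs.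
  have hind := @indep_KO R n m qs vs.
  have ans := hc _ _ (PO R m) (KO qs vs) hK hind.
  split.
  + apply: qans_inj => x; rewrite -qans_lin.
    have [_ eE _] := @lcomb_props _ _ (PO R m) (KO qs vs) c x hK (hind x).
    have [_ _ eA _] := ans x.
    by move: eA; rewrite eE => -[].
  + have [_ _ eV] := @lcomb_props _ _ (PO R m) (KO qs vs) c 0%R hK (hind 0%R).
    have [_ _ _ vA] := ans 0%R.
    move: vA; rewrite eV.
    rewrite (eq_bigr (fun i => ((c i ^+ 2) * vs i)%:E)); last first.
      by move=> i _; rewrite (@var_KO R n m qs vs Hvs) EFinM.
    by rewrite sumEFin lee_fin.
- case=> c [sq sv]; exists c => d T P K hK hind x.
  have [L2 eE eV] := @lcomb_props _ _ P K c x hK (hind x).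
  split.
  + exact: (@Lfun_meas _ _ _ P _ _ L2).
  + apply/Lfun1_integrable; apply: (Lfun_subset12 _ L2); exact: fin_num_measure.
  + by rewrite eE qans_lin sq.
  + rewrite eV; apply: (@le_trans _ _ (\sum_(i < m) c i ^+ 2 * vs i)%:E); last by rewrite lee_fin.
    rewrite -sumEFin; apply: lee_sum => i _; rewrite [in X in _ <= X]EFinM; apply: lee_wpmul2l.
      by rewrite lee_fin sqr_ge0.
    by have [_ _ _ vX] := hK i x.
Qed.

End main.

Theorem proposition1 (R : realType) (n m : nat) (Hn : (1 <= n)%N)
  (qs : 'I_m -> 'rV[R]_n) (vs : 'I_m -> R) (q : 'rV[R]_n) (v : R)
  (Hvs : forall j, 0 <= vs j) (Hv : 0 <= v) :
  (linearly_answerable qs vs q v <->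
     determines [seq (qs j, vs j) | j : 'I_m] (q, v)) /\
  (determines [seq (qs j, vs j) | j : 'I_m] (q, v) <->
     exists c : 'I_m -> R,
       \sum_(j < m) c j *: qs j = q /\ \sum_(j < m) c j ^+ 2 * vs j <= v).
Proof.
have h23 : determines [seq (qs j, vs j) | j : 'I_m] (q, v) <->
     exists c : 'I_m -> R,
       \sum_(j < m) c j *: qs j = q /\ \sum_(j < m) c j ^+ 2 * vs j <= v.
  split; first by move/det_cert/cert_coeffs.
  by case=> c [sq sv]; exact: (@coeffs_det R n m qs vs q v c sq sv).
split => //; rewrite h23; exact: la_iff.
Qed.
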